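(* For any $\theta_0=(\gamma_0,\mu_0,\sigma_0)\in(-1/2,\infty)\times\mathbb{R}\times(0,\infty)$, the three-parameter GEV family satisfies \[P_{\theta_0}\big(\mathbb{R}\setminus\bar S(\varepsilon)\big)=o(\varepsilon^2),\qquad\varepsilon\downarrow0.\]
   Context: $P_\theta$, $\theta=(\gamma,\mu,\sigma)\in\Theta=\mathbb{R}\times\mathbb{R}\times(0,\infty)$, is the GEV distribution with Lebesgue density $p_\theta(x)=\sigma^{-1}e^{-u}u^{\gamma+1}\mathbf 1(1+\gamma z>0)$, $z=(x-\mu)/\sigma$, $u=(1+\gamma z)^{-1/\gamma}$ for $\gamma\ne0$, $u=e^{-z}$ for $\gamma=0$. Its support is $S_\theta=\{x:\sigma+\gamma(x-\mu)>0\}$. $U_\varepsilon(\theta_0)=\{\theta\in\Theta:\|\theta-\theta_0\|<\varepsilon\}$ and $\bar S(\varepsilon)=\bigcap_{\theta\in U_\varepsilon(\theta_0)}S_\theta$. *)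

(* Defs.v *)
From HB Require Import structures.
From mathcomp Require Import all_boot all_order all_algebra.
From mathcomp Require Import all_classical all_reals all_analysis.
Set Implicit Arguments. Unset Strict Implicit. Unset Printing Implicit Defensive.
Import Order.TTheory GRing.Theory Num.Theory.
Local Open Scope classical_set_scope.
Local Open Scope ring_scope.

Section GEV.
Variable R : realType.

Definition gev_density (g m s x : R) : R :=
  let z := (x - m) / s in
  if 0 < 1 + g * z then
    let u := if g == 0 then expR (- z) else (1 + g * z) `^ (- g^-1) in
    s^-1 * expR (- u) * u `^ (g + 1)
  else 0.

Definition gev_prob (g m s : R) (A : set R) : \bar R :=
  (\int[lebesgue_measure]_(x in A) (gev_density g m s x)%:E)%E.

Definition gev_support (g m s : R) : set R := [set x | 0 < s + g * (x - m)].

Definition param_dist (g m s g0 m0 s0 : R) : R :=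
  Num.sqrt ((g - g0) ^+ 2 + (m - m0) ^+ 2 + (s - s0) ^+ 2).

Definition Sbar (g0 m0 s0 eps : R) : set R :=
  [set x | forall g m s : R, 0 < s -> param_dist g m s g0 m0 s0 < eps ->
           gev_support g m s x].

End GEV.

(* Main.v *)
Require Import Defs.
From HB Require Import structures.
From mathcomp Require Import all_boot all_order all_algebra.
From mathcomp Require Import all_classical all_reals all_analysis.
From mathcomp Require Import ring lra.
From mathcomp Require Import measurable_realfun.
Import Order.TTheory GRing.Theory Num.Theory.
Local Open Scope classical_set_scope.
Local Open Scope ring_scope.

Section Aux.
Variable R : realType.

Lemma mono_int (F G : R -> \bar R) :
  (forall x, (0 <= F x)%E) -> (forall x, (F x <= G x)%E) ->
  (\int[lebesgue_measure]_x F x <= \int[lebesgue_measure]_x G x)%E.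
Proof.
move=> F0 FG.
have G0 : forall x, (0 <= G x)%E by move=> x; exact: le_trans (F0 x) (FG x).
rewrite (ge0_integralTE lebesgue_measure F0) (ge0_integralTE lebesgue_measure G0).
apply: ereal_sup_le => _ [h hF <-]; exists h => //.
by move=> x; exact: le_trans (hF x) (FG x).
Qed.

Lemma absM_lb (a b e : R) : `|a| <= e -> - (e * `|b|) <= a * b.
Proof.
move=> ha.
have h1 : - `|a * b| <= a * b by rewrite lerNl -normrN ler_norm.
apply: le_trans h1; rewrite lerN2 normrM.
by apply: ler_wpM2r.
Qed.

Lemma dist_comp (g m s g0 m0 s0 : R) :
  [/\ `|g - g0| <= param_dist g m s g0 m0 s0,
      `|m - m0| <= param_dist g m s g0 m0 s0 &
      `|s - s0| <= param_dist g m s g0 m0 s0].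
Proof.
rewrite /param_dist.
have H (a : R) t : a ^+ 2 <= t -> `|a| <= Num.sqrt t.
  by move=> b0; rewrite -sqrtr_sqr ler_wsqrtr.
have q1 := sqr_ge0 (g - g0); have q2 := sqr_ge0 (m - m0); have q3 := sqr_ge0 (s - s0).
by split; apply: H; lra.
Qed.

Lemma sbar_incl (g0 m0 s0 eps x : R) : 0 < eps -> eps <= 1 ->
  eps * (2 + `|g0| + `|x - m0|) < s0 + g0 * (x - m0) -> Sbar g0 m0 s0 eps x.
Proof.
move=> e0 e1 hx g m s s_gt0 hd.
have [dg dm ds] := dist_comp g m s g0 m0 s0.
have hg : `|g - g0| <= eps by apply: ltW; exact: le_lt_trans dg hd.
have hm : `|m - m0| <= eps by apply: ltW; exact: le_lt_trans dm hd.
have hs : `|s - s0| <= eps by apply: ltW; exact: le_lt_trans ds hd.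
rewrite /gev_support /=.
have E : s + g * (x - m) = s0 + g0 * (x - m0) + (s - s0) + (g - g0) * (x - m0)
   - g0 * (m - m0) - (g - g0) * (m - m0) by ring.
rewrite E.
have b1 := @absM_lb _ (x - m0) _ hg.
have b2 := @absM_lb (- g0) (m - m0) `|g0| ltac:(by rewrite normrN).
have b3 := @absM_lb (- (g - g0)) (m - m0) eps ltac:(by rewrite normrN).
have b4 : - eps <= s - s0.
  by rewrite lerNl; apply: le_trans hs; rewrite -normrN; exact: ler_norm.
have b5 : `|m - m0| <= 1 := le_trans hm e1.
have b6 : eps * `|m - m0| <= eps by rewrite -{2}(mulr1 eps) ler_wpM2l // ltW.
have b7 : `|g0| * `|m - m0| <= `|g0| * eps by apply: ler_wpM2l.
move: b1 b2 b3 b4 b6 b7 hx => *. 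
lra.
Qed.

Lemma expR_pow_lb (N : nat) (u : R) : (0 < N)%N -> 0 <= u ->
  u ^+ N <= N%:R ^+ N * expR u.
Proof.
move=> N0 u0.
have NR : (0 : R) < N%:R by rewrite ltr0n.
have -> : expR u = expR (u / N%:R) ^+ N.
  by rewrite -expRM_natl mulrC divfK // gt_eqF.
rewrite -exprMn; apply: lerXn2r; rewrite ?nnegrE //.
have h := expR_ge1Dx (u / N%:R).
  apply: (@le_trans _ _ (N%:R * (u / N%:R))).
    by rewrite mulrC divfK // gt_eqF.
  rewrite ler_pM2l //; have : 0 <= u / N%:R by apply: divr_ge0 => //; apply: ltW.
  by move=> ?; lra.
Qed.

Lemma powR_expR_bound (a : R) : 0 <= a ->
  exists K : R, 0 < K /\ forall u : R, 0 < u -> u `^ a * expR (- u) <= K.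
Proof.
move=> a0.
pose N := (Num.trunc a).+1.
have aN : a < N%:R by rewrite -truncn_lt_nat.
exists (1 + N%:R ^+ N); split.
  by apply: (lt_le_trans ltr01); rewrite lerDl exprn_ge0.
move=> u u0.
have e0 := expR_gt0 (- u).
have eE : expR (- u) * expR u = 1 by rewrite -expRD addNr expR0.
have [u1|u1] := leP u 1.
- have h1 : u `^ a <= 1.
    rewrite -(powRr0 u); apply: ger_powR => //; by rewrite u0.
  have h2 : expR (- u) <= 1 by rewrite -expR0 ler_expR; lra.
  have : u `^ a * expR (- u) <= 1 by rewrite -(mulr1 1) ler_pM // powR_ge0.
  have : 0 <= N%:R ^+ N :> R by rewrite exprn_ge0.
  lra.
- have h1 : u `^ a <= u ^+ N.
    rewrite -powR_mulrn; last exact: ltW.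
    by apply: ler_powR; [exact: ltW | exact: ltW].
  have h2 := @expR_pow_lb N u (ltn0Sn _) (ltW u0).
  have h3 : u `^ a * expR (- u) <= N%:R ^+ N * expR u * expR (- u).
    apply: ler_wpM2r; first exact: ltW.
    exact: le_trans h1 h2.
  have h4 : N%:R ^+ N * expR u * expR (- u) = N%:R ^+ N :> R.
    by rewrite -mulrA (mulrC (expR u)) eE mulr1.
  rewrite h4 in h3; lra.
Qed.

Lemma one_plus (g0 m0 s0 x : R) : 0 < s0 ->
  1 + g0 * ((x - m0) / s0) = (s0 + g0 * (x - m0)) / s0.
Proof. by move=> s0p; field; rewrite gt_eqF. Qed.

Lemma dens_nonpos (g0 m0 s0 x : R) : 0 < s0 -> s0 + g0 * (x - m0) <= 0 ->
  gev_density g0 m0 s0 x = 0.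
Proof.
move=> s0p h; rewrite /gev_density /= one_plus // ifF //.
apply/negbTE; rewrite -leNgt ler_pdivrMr // mul0r //.
Qed.

Lemma dens_pos (g0 m0 s0 x : R) : 0 < s0 -> g0 != 0 -> 0 < s0 + g0 * (x - m0) ->
  gev_density g0 m0 s0 x =
  s0^-1 * expR (- (((s0 + g0 * (x - m0)) / s0) `^ (- g0^-1)))
   * (((s0 + g0 * (x - m0)) / s0) `^ (- g0^-1)) `^ (g0 + 1).
Proof.
move=> s0p g0n h; rewrite /gev_density /= one_plus // ifT; last exact: divr_gt0.
by rewrite (negbTE g0n).
Qed.

Lemma dens_gumbel (m0 s0 x : R) : 0 < s0 ->
  gev_density 0 m0 s0 x =
  s0^-1 * expR (- expR (- ((x - m0) / s0))) * expR (- ((x - m0) / s0)).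
Proof.
move=> s0p; rewrite /gev_density /= mul0r addr0 ifT ?ltr01 // eqxx add0r.
by rewrite powRr1 // ltW // expR_gt0.
Qed.

Lemma dens_ge0 (g0 m0 s0 x : R) : 0 < s0 -> 0 <= gev_density g0 m0 s0 x.
Proof.
move=> s0p; rewrite /gev_density /=; case: ifP => // _.
by apply: mulr_ge0; [apply: mulr_ge0; [rewrite invr_ge0 ltW | apply: ltW; exact: expR_gt0] | exact: powR_ge0].
Qed.
End Aux.

Section Aux2.
Variable R : realType.

Lemma not_sbar (g0 m0 s0 eps x : R) : 0 < eps -> eps <= 1 -> ~ Sbar g0 m0 s0 eps x ->
  s0 + g0 * (x - m0) <= eps * (2 + `|g0| + `|x - m0|).
Proof.
move=> e0 e1 nS; rewrite leNgt; apply/negP => h; apply: nS; exact: sbar_incl.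
Qed.

Lemma reduce (g0 m0 s0 eps : R) (H : R -> \bar R) : 0 < s0 ->
  (forall x, (0 <= H x)%E) ->
  (forall x, ~ Sbar g0 m0 s0 eps x -> ((gev_density g0 m0 s0 x)%:E <= H x)%E) ->
  (gev_prob g0 m0 s0 (~` Sbar g0 m0 s0 eps) <= \int[lebesgue_measure]_x H x)%E.
Proof.
move=> s0p H0 HH; rewrite /gev_prob integral_mkcond; apply: mono_int => x; rewrite patchE.
- case: ifP => _ //; rewrite lee_fin; exact: dens_ge0.
- case: ifP => hx //; apply: HH; move: hx; rewrite inE; exact.
Qed.

Lemma int_box (lo hi c : R) : lo <= hi -> 0 <= c ->
  (\int[lebesgue_measure]_x (((fun _ => c%:E) \_ [set` `[lo, hi]]) x) = (c * (hi - lo))%:E)%E.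
Proof.
move=> lh c0; rewrite -integral_mkcond integral_cst /=; last exact: measurable_itv.
rewrite lebesgue_measure_itv /= lte_fin.
case: (ltP lo hi) => h; first by rewrite -EFinD -EFinM.
have -> : hi = lo by apply/eqP; rewrite eq_le h lh.
by rewrite subrr mulr0 mule0.
Qed.
End Aux2.

Section Aux3.
Variable R : realType.

Lemma case_pos (g0 m0 s0 eta : R) : 0 < g0 -> 0 < s0 -> 0 < eta ->
  exists delta : R, 0 < delta /\ forall eps : R, 0 < eps -> eps < delta ->
   (gev_prob g0 m0 s0 (~` Sbar g0 m0 s0 eps) <= (eta * eps ^+ 2)%:E)%E.
Proof.
move=> g0p s0p etap.
have [K [K0 HK]] := @powR_expR_bound R (3 * g0 + 1) ltac:(lra).
pose C0 := 2 + g0.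
pose C1 := C0 + s0 / g0.
have C0p : 0 < C0 by rewrite /C0; lra.
have sg : 0 < s0 / g0 by exact: divr_gt0.
have C1p : 0 < C1 by rewrite /C1; lra.
pose M := K * C1 ^+ 3 / (s0 ^+ 3 * g0).
have Mp : 0 < M.
  by apply: divr_gt0; [apply: mulr_gt0 => //; exact: exprn_gt0 |
                      apply: mulr_gt0 => //; exact: exprn_gt0].
exists (Num.min (Num.min 1 g0) (Num.min (s0 / C0) (eta / M))); split.
  by rewrite !lt_min ltr01 g0p (divr_gt0 s0p C0p) (divr_gt0 etap Mp).
move=> eps e0; rewrite !lt_min => /andP[/andP[e1 eg] /andP[es em]].
rewrite ltr_pdivlMr // in es; rewrite ltr_pdivlMr // in em.
have es2 : eps * (2 + g0) < s0 by [].

pose c := s0^-1 * K * (eps * C1 / s0) ^+ 2.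
have c0 : 0 <= c.
  by apply: mulr_ge0; [apply: mulr_ge0; [rewrite invr_ge0 ltW | apply: ltW] | exact: sqr_ge0].
pose lo := m0 - s0 / g0.
pose hi := lo + eps * C1 / g0.
have d0 : 0 <= eps * C1 / g0 by apply: divr_ge0; [apply: mulr_ge0; apply: ltW|apply: ltW].
have lohi : lo <= hi by rewrite /hi lerDl.
apply: le_trans (@reduce R g0 m0 s0 eps ((fun _ => c%:E) \_ [set` `[lo, hi]]) s0p _ _) _.
- by move=> x; rewrite patchE; case: ifP => _; rewrite lee_fin.
- move=> x nS.
  have hp := @not_sbar _ g0 m0 s0 eps x e0 (ltW e1) nS.
  rewrite (gtr0_norm g0p) in hp.
  case: (leP (s0 + g0 * (x - m0)) 0) => hp0.
    rewrite dens_nonpos // patchE; by case: ifP => _; rewrite lee_fin.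
  have ylt : x - m0 < 0.
    rewrite ltNge; apply/negP => y0.
    rewrite ger0_norm // in hp.
    have : eps * (x - m0) <= g0 * (x - m0) by apply: ler_wpM2r => //; apply: ltW.
    move: hp es2 hp0 => *; lra.
  rewrite ltr0_norm // in hp.
  have yr : - (x - m0) < s0 / g0.
    by rewrite ltr_pdivlMr // ; move: hp0 => *; lra.
  have pC : s0 + g0 * (x - m0) <= eps * C1.
    apply: le_trans hp _; apply: ler_wpM2l; first exact: ltW.
    rewrite /C1 /C0; lra.
  have xin : [set` `[lo, hi]] x.
    rewrite /= in_itv /=; apply/andP; split.
      by rewrite /lo; lra.
    have : (s0 + g0 * (x - m0)) / g0 <= eps * C1 / g0 by rewrite ler_pM2r // invr_gt0.
    have -> : (s0 + g0 * (x - m0)) / g0 = x - m0 + s0 / g0 by field; rewrite gt_eqF.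
    by rewrite /hi /lo; lra.
  rewrite patchE mem_set // lee_fin dens_pos // ?gt_eqF //.
  set w := (s0 + g0 * (x - m0)) / s0.
  have w0 : 0 < w by exact: divr_gt0.
  have wle : w <= eps * C1 / s0 by rewrite ler_pM2r // invr_gt0.
  set u := w `^ (- g0^-1).
  have u0 : 0 < u by exact: powR_gt0.
  have eu : u `^ (g0 + 1) = u `^ (3 * g0 + 1) * w ^+ 2.
    have -> : g0 + 1 = (3 * g0 + 1) + (- g0^-1)^-1 * 2 by field; rewrite gt_eqF.
    rewrite powRD; last by apply/implyP => _; rewrite gt_eqF.
    congr (_ * _).
    by rewrite /u -powRrM mulrA mulrV ?mul1r ?unitfE ?oppr_eq0 ?invr_eq0 ?gt_eqF //
      -(powR_mulrn 2 (ltW w0)).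
  rewrite eu /c.
  have -> : s0^-1 * expR (- u) * (u `^ (3 * g0 + 1) * w ^+ 2) =
            s0^-1 * (u `^ (3 * g0 + 1) * expR (- u)) * w ^+ 2 by ring.
  apply: ler_pM.
  + apply: mulr_ge0; [rewrite invr_ge0 ltW // | apply: mulr_ge0; [exact: powR_ge0 | apply: ltW; exact: expR_gt0]].
  + exact: sqr_ge0.
  + apply: ler_wpM2l; first by rewrite invr_ge0 ltW.
    exact: HK.
  + have wl0 : 0 <= eps * C1 / s0 by apply: le_trans wle; exact: ltW.
    by apply: lerXn2r; rewrite ?nnegrE // ltW.
- rewrite int_box // lee_fin.
  have -> : c * (hi - lo) = M * eps * eps ^+ 2.
    by rewrite /c /hi /M; field; rewrite !gt_eqF.
  rewrite ler_pM2r ?exprn_gt0 //; rewrite mulrC; exact: ltW.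
Qed.
End Aux3.

Section Aux4.
Variable R : realType.

Lemma case_neg (g0 m0 s0 eta : R) : - (1 / 2) < g0 -> g0 < 0 -> 0 < s0 -> 0 < eta ->
  exists delta : R, 0 < delta /\ forall eps : R, 0 < eps -> eps < delta ->
   (gev_prob g0 m0 s0 (~` Sbar g0 m0 s0 eps) <= (eta * eps ^+ 2)%:E)%E.
Proof.
move=> g0l g0n s0p etap.
have ng : 0 < - g0 by rewrite oppr_gt0.
pose C0 := 2 - g0.
pose r := s0 / (- g0).
have rp : 0 < r by exact: divr_gt0.
pose C1 := C0 + r.
have C0p : 0 < C0 by rewrite /C0; lra.
have C1p : 0 < C1 by rewrite /C1 /C0; lra.
pose k := (- g0^-1) * (g0 + 1).
have ig : 2 < - g0^-1.
  have -> : - g0^-1 = (- g0)^-1 by rewrite invrN.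
  rewrite -div1r ltr_pdivlMr //; lra.
have kE : k = - g0^-1 - 1 by rewrite /k; field; rewrite lt_eqF.
have k1 : 1 < k by rewrite kE; lra.
pose B := C1 ^+ 2 / (s0 ^+ 2 * (- g0)).
have Bp : 0 < B by apply: divr_gt0; [exact: exprn_gt0 | apply: mulr_gt0 => //; exact: exprn_gt0].
pose th := eta / B.
have thp : 0 < th by exact: divr_gt0.
pose T := th `^ ((k - 1)^-1).
have Tp : 0 < T by exact: powR_gt0.
exists (Num.min (Num.min 1 (- g0)) (Num.min (s0 / C0) (s0 / C1 * T))); split.
  by rewrite !lt_min ltr01 ng (divr_gt0 s0p C0p) (mulr_gt0 (divr_gt0 s0p C1p) Tp).
move=> eps e0; rewrite !lt_min => /andP[/andP[e1 eg] /andP[es et]].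
rewrite ltr_pdivlMr // in es.
have es2 : eps * (2 - g0) < s0 by [].
pose q := eps * C1 / s0.
have q0 : 0 < q by apply: divr_gt0 => //; exact: mulr_gt0.
have qT : q < T.
  have h : eps * C1 < s0 * T.
    have -> : s0 * T = s0 / C1 * T * C1 by field; rewrite gt_eqF.
    by rewrite ltr_pM2r.
  rewrite /q ltr_pdivrMr //; lra.
pose c := s0^-1 * q `^ k.
have c0 : 0 <= c by apply: mulr_ge0; [rewrite invr_ge0 ltW | exact: powR_ge0].
pose hi := m0 + r.
pose lo := hi - eps * C1 / (- g0).
have d0 : 0 <= eps * C1 / (- g0) by apply: divr_ge0; [apply: mulr_ge0; apply: ltW|apply: ltW].
have lohi : lo <= hi by rewrite /lo gerDl oppr_le0.
apply: le_trans (@reduce R g0 m0 s0 eps ((fun _ => c%:E) \_ [set` `[lo, hi]]) s0p _ _) _.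
- by move=> x; rewrite patchE; case: ifP => _; rewrite lee_fin.
- move=> x nS.
  have hp := @not_sbar _ g0 m0 s0 eps x e0 (ltW e1) nS.
  rewrite (ltr0_norm g0n) in hp.
  case: (leP (s0 + g0 * (x - m0)) 0) => hp0.
    rewrite dens_nonpos // patchE; by case: ifP => _; rewrite lee_fin.
  have ygt : 0 < x - m0.
    rewrite ltNge; apply/negP => y0.
    rewrite ler0_norm // in hp.
    have : 0 <= (g0 + eps) * (x - m0) by apply: mulr_le0 => //; lra.
    move: hp es2 hp0 => *; lra.
  rewrite gtr0_norm // in hp.
  have yr : x - m0 < r.
    rewrite /r ltr_pdivlMr //; move: hp0 => *; lra.
  have pC : s0 + g0 * (x - m0) <= eps * C1.
    apply: le_trans hp _; apply: ler_wpM2l; first exact: ltW.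
    rewrite /C1 /C0; lra.
  have xin : [set` `[lo, hi]] x.
    rewrite /= in_itv /=; apply/andP; split; last by rewrite /hi; lra.
    have : (s0 + g0 * (x - m0)) / (- g0) <= eps * C1 / (- g0) by rewrite ler_pM2r // invr_gt0.
    have -> : (s0 + g0 * (x - m0)) / (- g0) = r - (x - m0).
      by rewrite /r; field; rewrite ?oppr_eq0 lt_eqF.
    by rewrite /lo /hi; lra.
  rewrite patchE mem_set // lee_fin dens_pos // ?lt_eqF //.
  set w := (s0 + g0 * (x - m0)) / s0.
  have w0 : 0 < w by exact: divr_gt0.
  have wle : w <= q by rewrite /q /w ler_pM2r // invr_gt0.
  set u := w `^ (- g0^-1).
  have u0 : 0 < u by exact: powR_gt0.
  have eu : u `^ (g0 + 1) = w `^ k by rewrite /u -powRrM.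
  rewrite eu /c.
  have e1u : expR (- u) <= 1 by rewrite -expR0 ler_expR; lra.
  apply: (@le_trans _ _ (s0^-1 * w `^ k)).
    rewrite -[X in _ <= X]mul1r (mulrC _ (expR _)) -mulrA.
    rewrite ler_pM2r ?e1u //; apply: mulr_gt0; [rewrite invr_gt0 // | exact: powR_gt0].
  apply: ler_wpM2l; first by rewrite invr_ge0 ltW.
  apply: ge0_ler_powR => //; first by lra.
  + by rewrite nnegrE ltW.
  + by rewrite nnegrE ltW.
- rewrite int_box // lee_fin.
  have qk : q `^ k = q * q `^ (k - 1) by rewrite mulr_powRB1 //; [exact: ltW | lra].
  have -> : c * (hi - lo) = q `^ (k - 1) * B * eps ^+ 2.
    rewrite /c qk; move: (q `^ (k - 1)) => P.
    rewrite /lo /hi /B /q; field.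
    by rewrite lt_eqF // gt_eqF.
  rewrite ler_pM2r ?exprn_gt0 //.
  have : q `^ (k - 1) <= th.
    apply: (@le_trans _ _ (T `^ (k - 1))).
      apply: ge0_ler_powR; [lra | by rewrite nnegrE ltW | by rewrite nnegrE ltW | exact: ltW].
    rewrite /T -powRrM mulVf ?powRr1 //; [exact: ltW | lra].
  by rewrite -ler_pdivlMr.
Qed.
End Aux4.

Section Aux5.
Variable R : realType.

Lemma gumbel_bound (z : R) : expR (- expR (- z)) * expR (- z) <= 4 * expR (- `|z|).
Proof.
have [z0|z0] := leP 0 z.
- rewrite ger0_norm //.
  have h : expR (- expR (- z)) <= 1 by rewrite -expR0 ler_expR oppr_le0 ltW // expR_gt0.
  have e0 := expR_gt0 (- z).
  have : expR (- expR (- z)) * expR (- z) <= 1 * expR (- z) by rewrite ler_pM2r.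
  lra.
- rewrite ltr0_norm // opprK.
  set v := expR (- z).
  have v0 : 0 < v by exact: expR_gt0.
  have hv := @expR_pow_lb R 2 v isT (ltW v0).
  have ev : expR (- v) * expR v = 1 by rewrite -expRD addNr expR0.
  have h1 : v ^+ 2 * expR (- v) <= 4.
    have : v ^+ 2 * expR (- v) <= 2%:R ^+ 2 * expR v * expR (- v).
      by rewrite ler_pM2r ?expR_gt0.
    by rewrite -mulrA (mulrC (expR v)) ev mulr1 => h; apply: le_trans h _; lra.
  have -> : expR z = v^-1 by rewrite /v expRN invrK.
  have -> : expR (- v) * v = (v ^+ 2 * expR (- v)) / v by field; rewrite gt_eqF.
  by rewrite ler_pM2r // invr_gt0.
Qed.

Lemma expR_neg_cube (t : R) : 0 < t -> expR (- t) <= 27 / t ^+ 3.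
Proof.
move=> t0.
have h := @expR_pow_lb R 3 t isT (ltW t0).
have e0 := expR_gt0 t.
rewrite expRN ler_pdivlMr ?exprn_gt0 // mulrC ler_pdivrMr //.
by apply: le_trans h _; rewrite mulrC; lra.
Qed.

End Aux5.

Section Aux6.
Import numFieldNormedType.Exports.
Variable R : realType.

Lemma int_laplace (c A : R) : 0 < c -> 0 <= A ->
  (\int[lebesgue_measure]_x ((A * expR (- (`|x| / c)))%:E) <= (2 * (A * c))%:E)%E.
Proof.
move=> c0 A0.
pose f : R -> R := fun x : R => A * expR (- (`|x| / c)).
have f0 : forall x, 0 <= f x by move=> x; apply: mulr_ge0 => //; apply: ltW; exact: expR_gt0.
have cf : continuous f.
  move=> x; apply: (@continuousM R R (fun=> A) (fun x => expR (- (`|x| / c)))).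
    exact: cst_continuous.
  apply: (@continuous_comp _ _ _ (fun x : R => - (`|x| / c)) expR); last exact: continuous_expR.
  apply: (@continuousN R R^o R (fun x : R => `|x| / c)).
  apply: (@continuousM R R (fun x : R => `|x|) (fun=> c^-1)).
    exact: norm_continuous.
  exact: cst_continuous.
have ef : f =1 f \o -%R by move=> x; rewrite /f /= normrN.
have := ge0_symfun_integralT f0 cf ef.
rewrite /f => ->.
have mD : measurable [set x : R | 0 <= x] by rewrite -set_itvcy.
have -> : (\int[lebesgue_measure]_(x in [set x : R | (0 <= x)%R]) (A * expR (- (`|x| / c)))%:E =
   \int[lebesgue_measure]_(x in [set x : R | (0 <= x)%R]) ((A * c)%:E * (exponential_pdf c^-1 x)%:E))%E.
  apply: eq_integral => x; rewrite inE /= => x0.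
  rewrite -EFinM exponential_pdfE // ger0_norm // mulNr (mulrC c^-1 x).
  by congr EFin; set e := expR _; field; rewrite gt_eqF.
rewrite ge0_integralZl_EFin //; last 3 first.
- by move=> x _; rewrite lee_fin exponential_pdf_ge0 // invr_ge0 ltW.
- apply/measurable_EFinP; apply: measurable_funS (measurable_exponential_pdf _) => //.
- by apply: mulr_ge0 => //; apply: ltW.
have hI : (\int[lebesgue_measure]_(x in [set x : R | (0 <= x)%R]) (exponential_pdf c^-1 x)%:E <= 1)%E.
  rewrite integral_mkcond -(integral_exponential_pdf (rate := c^-1)); last by rewrite invr_gt0.
  apply: mono_int => x; rewrite patchE; case: ifP => _ //;
    by rewrite lee_fin exponential_pdf_ge0 // invr_ge0 ltW.
have AC : (0 <= (A * c)%:E)%E by rewrite lee_fin mulr_ge0 // ltW.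
have h2 : ((A * c)%:E * \int[lebesgue_measure]_(x in [set x : R | (0 <= x)%R]) (exponential_pdf c^-1 x)%:E <= (A * c)%:E)%E.
  by apply: le_trans (lee_wpmul2l AC hI) _; rewrite mule1.
have -> : ((2 * (A * c))%:E = 2%:E * (A * c)%:E)%E by rewrite EFinM.
apply: lee_wpmul2l => //.
Qed.
End Aux6.

Section Aux7.
Variable R : realType.

Lemma case_zero (m0 s0 eta : R) : 0 < s0 -> 0 < eta ->
  exists delta : R, 0 < delta /\ forall eps : R, 0 < eps -> eps < delta ->
   (gev_prob 0 m0 s0 (~` Sbar 0 m0 s0 eps) <= (eta * eps ^+ 2)%:E)%E.
Proof.
move=> s0p etap.
pose c := 2 * s0.
have cp : 0 < c by rewrite /c; lra.
pose G0 := expR ((`|m0| + 2) / c).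
have G0p : 0 < G0 by exact: expR_gt0.
pose Mz := 3456 * G0.
have Mzp : 0 < Mz by rewrite /Mz; lra.
exists (Num.min (Num.min 1 (s0 / 2)) (eta / Mz)); split.
  by rewrite !lt_min ltr01 (divr_gt0 s0p) ?(divr_gt0 etap Mzp) //= ltr0n.
move=> eps e0; rewrite !lt_min => /andP[/andP[e1 es] em].
rewrite ltr_pdivlMr // in em.
pose t := (2 * eps)^-1.
have tp : 0 < t by rewrite /t invr_gt0; lra.
pose A := 4 * s0^-1 * G0 * expR (- t).
have A0 : 0 <= A.
  by rewrite /A; apply: mulr_ge0; [apply: mulr_ge0; [apply: mulr_ge0; [lra | rewrite invr_ge0 ltW] | exact: ltW] | apply: ltW; exact: expR_gt0].
apply: le_trans (@reduce R 0 m0 s0 eps (fun x => (A * expR (- (`|x| / c)))%:E) s0p _ _) _.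
- by move=> x; rewrite lee_fin mulr_ge0 // ltW // expR_gt0.
- move=> x nS.
  have hp := @not_sbar _ 0 m0 s0 eps x e0 (ltW e1) nS.
  rewrite normr0 mul0r addr0 addr0 in hp.
  rewrite lee_fin dens_gumbel //.
  set z := (x - m0) / s0.
  have hz : `|z| = `|x - m0| / s0 by rewrite /z normrM normfV (gtr0_norm s0p).
  apply: (@le_trans _ _ (s0^-1 * (4 * expR (- `|z|)))).
    by rewrite -mulrA; apply: ler_wpM2l; [rewrite invr_ge0 ltW | exact: gumbel_bound].
  have q : s0 / eps <= 2 + `|x - m0| by rewrite ler_pdivrMr // mulrC.
  have tri : `|x| <= `|x - m0| + `|m0|.
    by have := ler_normD (x - m0) m0; rewrite subrK.
  have key : - `|z| <= (`|m0| + 2) / c + (- t + - (`|x| / c)).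
    have tE : t = (s0 / eps) / c by rewrite /t /c; field; rewrite !gt_eqF.
    rewrite hz tE.
    move: (s0 / eps) q => Q q.
    have E : (`|m0| + 2) / c + (- (Q / c) + - (`|x| / c)) + `|x - m0| / s0 =
              (`|m0| + 2 - Q - `|x| + 2 * `|x - m0|) / c.
      by rewrite /c; field; rewrite gt_eqF.
    have : 0 <= (`|m0| + 2 - Q - `|x| + 2 * `|x - m0|) / c by apply: divr_ge0; lra.
    lra.
  have hk : expR (- `|z|) <= expR ((`|m0| + 2) / c + (- t + - (`|x| / c))) by rewrite ler_expR.
  rewrite !expRD in hk.
  rewrite /A.
  have -> : 4 / s0 * G0 * expR (- t) * expR (- (`|x| / c)) =
    s0^-1 * (4 * (G0 * (expR (- t) * expR (- (`|x| / c))))) by ring.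
  apply: ler_wpM2l; first by rewrite invr_ge0 ltW.
  apply: ler_wpM2l; first lra.
  exact: hk.
- apply: le_trans (@int_laplace R c A cp A0) _; rewrite lee_fin.
  have ht := @expR_neg_cube R t tp.
  have E27 : 27 / t ^+ 3 = 216 * eps ^+ 3 by rewrite /t exprVn invrK; ring.
  rewrite E27 in ht.
  have -> : 2 * (A * c) = 16 * G0 * expR (- t) by rewrite /A /c; field; rewrite gt_eqF.
  apply: (@le_trans _ _ (16 * G0 * (216 * eps ^+ 3))).
    by apply: ler_wpM2l => //; rewrite mulr_ge0 // ltW.
  have -> : 16 * G0 * (216 * eps ^+ 3) = eps * Mz * eps ^+ 2 by rewrite /Mz; ring.
  by rewrite ler_pM2r ?exprn_gt0 // ltW.
Qed.
End Aux7.

Theorem lemmaE1 (R : realType) (g0 m0 s0 : R) :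
  - (1 / 2) < g0 -> 0 < s0 ->
  forall eta : R, 0 < eta ->
  exists delta : R, 0 < delta /\
    forall eps : R, 0 < eps -> eps < delta ->
      (gev_prob g0 m0 s0 (~` Sbar g0 m0 s0 eps) <= (eta * eps ^+ 2)%:E)%E.
Proof.
move=> g0l s0p eta etap.
have [g0n|g0p|->] := ltgtP g0 0.
- exact: case_neg.
- exact: case_pos.
- exact: case_zero.
Qed.
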